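(* Assume Assumptions 1 and 2 for some $\delta>0$. For distinct $u_1,u_2\in L$, let $N_{u_1u_2}$ be the number of common neighbors of $u_1$ and $u_2$ in the bipartite graph $G_b$. Then, as $n_R\to\infty$, $$\Pr[N_{u_1u_2}\ge 2\mid S_L,S_R,(u_1,u_2)\in E]=O(p_{u_1u_2}),$$ where $p_{u_1u_2}=\frac{M_{R2}}{M_{R1}^2}\cdot\frac{w_{u_1}w_{u_2}}{n_R}$.
   Context: Model: left nodes $L$ ($|L|=n_L$), right nodes $R$ ($|R|=n_R$), weight sequences $S_L=(w_u)_{u\in L}$, $S_R=(w_v)_{v\in R}$ of positive reals; $M_{Lk}=\frac1{n_L}\sum_{u\in L}w_u^k$, $M_{Rk}=\frac1{n_R}\sum_{v\in R}w_v^k$. The random bipartite graph $G_b=(L\sqcup R,E_b)$ contains each edge $(u,v)$, $u\in L$, $v\in R$, independently with probability $\min\left(\frac{w_uw_v}{n_RM_{R1}},1\right)$. The projected graph is $G=(L,E)$ with $(u,u')\in E$ for distinct $u,u'\in L$ iff there is $z\in R$ with $(u,z),(u',z)\in E_b$. Assumption 1: $\frac{w_uw_v}{n_RM_{R1}}\le1$ for all $u\in L,v\in R$. Assumption 2 (parameter $\delta>0$), as $n_L,n_R\to\infty$: $\max(S_L\cup S_R)=O(n_R^{1/2-\delta})$, $\min S_L=\Omega(1)$, $M_{R2}=O(M_{R1}^2)$, $M_{R4}=O(n_R^{1-2\delta})$. *)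

(* Defs.v *)
From HB Require Import structures.
From mathcomp Require Import all_boot all_order all_algebra.
From mathcomp Require Import reals exp.
Set Implicit Arguments. Unset Strict Implicit. Unset Printing Implicit Defensive.
Import Order.TTheory GRing.Theory Num.Theory.
Local Open Scope ring_scope.

Section Model.
Variable R : realType.
Variables (nL nR : nat).
Variables (wL : 'I_nL -> R) (wR : 'I_nR -> R).

Definition momL (k : nat) : R := (\sum_(u < nL) wL u ^+ k) / nL%:R.
Definition momR (k : nat) : R := (\sum_(v < nR) wR v ^+ k) / nR%:R.

Definition edge_prob (u : 'I_nL) (v : 'I_nR) : R :=
  Num.min (wL u * wR v / (nR%:R * momR 1)) 1.

Definition outcome := {set 'I_nL * 'I_nR}.

Definition outcome_prob (Eb : outcome) : R :=
  \prod_(e : 'I_nL * 'I_nR)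
     (if e \in Eb then edge_prob e.1 e.2 else 1 - edge_prob e.1 e.2).

Definition Pr (A : pred outcome) : R := \sum_(Eb : outcome | A Eb) outcome_prob Eb.

Definition condPr (A B : pred outcome) : R :=
  Pr [pred Eb | A Eb && B Eb] / Pr B.

Definition common_nb (Eb : outcome) (u1 u2 : 'I_nL) : nat :=
  #|[set z : 'I_nR | ((u1, z) \in Eb) && ((u2, z) \in Eb)]|.

Definition proj_edge (Eb : outcome) (u1 u2 : 'I_nL) : bool :=
  (u1 != u2) && [exists z : 'I_nR, ((u1, z) \in Eb) && ((u2, z) \in Eb)].

End Model.

(* Main.v *)
Require Import Defs.
From HB Require Import structures.
From mathcomp Require Import all_boot all_order all_algebra.
From mathcomp Require Import reals exp.
From mathcomp Require Import ring lra.
Import Order.TTheory GRing.Theory Num.Theory.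
Local Open Scope ring_scope.
Set Implicit Arguments. Unset Strict Implicit. Unset Printing Implicit Defensive.

Section Gen.
Variable R : realType.
Variable T : finType.
Variable q : T -> R.
Hypothesis q0 : forall e, 0 <= q e.
Hypothesis q1 : forall e, q e <= 1.

Definition Pg (E : {set T}) : R :=
  \prod_(e : T) (if e \in E then q e else 1 - q e).
Definition Prg (A : pred {set T}) : R := \sum_(E : {set T} | A E) Pg E.

Lemma Pg_ge0 E : 0 <= Pg E.
Proof. apply: prodr_ge0 => e _; case: ifP => _; [exact: q0 | by rewrite subr_ge0]. Qed.

Lemma Prg_ge0 A : 0 <= Prg A.
Proof. apply: sumr_ge0 => E _; exact: Pg_ge0. Qed.

Lemma Prg_mono (A B : pred {set T}) : (forall E, A E -> B E) -> Prg A <= Prg B.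
Proof.
move=> AB; rewrite /Prg [X in _ <= X](bigID A) /=.
have -> : \sum_(i | B i && A i) Pg i = \sum_(i | A i) Pg i.
  by apply: eq_bigl => E; case AE: (A E); rewrite ?andbF ?(AB _ AE).
rewrite lerDl; apply: sumr_ge0 => E _; exact: Pg_ge0.
Qed.

Lemma Prg_union (I : finType) (A : pred {set T}) (Az : I -> pred {set T}) :
  (forall E, A E -> exists z, Az z E) -> Prg A <= \sum_z Prg (Az z).
Proof.
move=> H; rewrite /Prg big_mkcond /=.
rewrite (eq_bigr (fun z => \sum_E (if Az z E then Pg E else 0))); last first.
  by move=> z _; rewrite big_mkcond.
rewrite exchange_big /=; apply: ler_sum => E _.
case AE: (A E); last by apply: sumr_ge0 => z _; case: ifP => _ //; exact: Pg_ge0.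
have [z Hz] := H E AE.
rewrite (bigD1 z) //= Hz lerDl; apply: sumr_ge0 => i _; case: ifP => _ //; exact: Pg_ge0.
Qed.

Definition rest (e0 : T) (E : {set T}) : R :=
  \prod_(e | e != e0) (if e \in E then q e else 1 - q e).

Lemma Pg_split e0 E : Pg E = (if e0 \in E then q e0 else 1 - q e0) * rest e0 E.
Proof. by rewrite /Pg (bigD1 e0). Qed.

Lemma rest_U1 e0 E : rest e0 (e0 |: E) = rest e0 E.
Proof.
by apply: eq_bigr => e ne; rewrite in_setU1 (negbTE ne).
Qed.

Lemma Prg_factor (e0 : T) (D : pred {set T}) :
  (forall E, D (E :\ e0) = D E) ->
  Prg [pred E : {set T} | (e0 \in E) && D E] = q e0 * Prg D.
Proof.
move=> HD.
set S := \sum_(j : {set T} | (e0 \notin j) && D j) rest e0 j.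
have C1 : Prg [pred E : {set T} | (e0 \in E) && D E] = q e0 * S.
  rewrite /Prg (reindex_onto (fun j : {set T} => e0 |: j) (fun E : {set T} => E :\ e0)) /=; last first.
    move=> E /=; case/andP => h _; exact: setD1K.
  rewrite /S mulr_sumr; apply: eq_big => j.
    case: (boolP (e0 \in j)) => hj /=.
      have -> : ((e0 |: j) :\ e0 == j) = false.
        by apply/negbTE/eqP => h; move: hj; rewrite -h setD11.
      by rewrite andbF.
    by rewrite setU11 -(HD (e0 |: j)) (setU1K hj) eqxx andbT.
  by move=> /andP[_ /eqP]; rewrite (Pg_split e0) setU11 rest_U1.
have C2 : Prg [pred E : {set T} | (e0 \notin E) && D E] = (1 - q e0) * S.
  rewrite /Prg /S mulr_sumr; apply: eq_bigr => j /andP[hj _].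
  by rewrite (Pg_split e0) (negbTE hj).
have C3 : Prg D = Prg [pred E : {set T} | (e0 \in E) && D E] + Prg [pred E : {set T} | (e0 \notin E) && D E].
  rewrite {1}/Prg (bigID (fun E : {set T} => e0 \in E)) /=.
  by congr (_ + _); apply: eq_bigl => E; rewrite andbC.
by rewrite C3 C1 C2; congr (_ * _); rewrite -mulrDl addrC subrK mul1r.
Qed.
End Gen.

Section Main.
Variable R : realType.
Variables nL nR : nat.
Variables (wL : 'I_nL -> R) (wR : 'I_nR -> R).
Hypothesis wLp : forall u, 0 < wL u.
Hypothesis wRp : forall v, 0 < wR v.

Definition qq (e : ('I_nL * 'I_nR)%type) : R := edge_prob wL wR e.1 e.2.

Lemma momR1_ge0 : 0 <= momR wR 1.
Proof.
apply: divr_ge0; last exact: ler0n.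
by apply: sumr_ge0 => v _; rewrite expr1 ltW.
Qed.

Lemma raw_ge0 (u : 'I_nL) (v : 'I_nR) : 0 <= wL u * wR v / (nR%:R * momR wR 1).
Proof.
apply: divr_ge0; first by rewrite mulr_ge0 // ltW.
by rewrite mulr_ge0 // ?ler0n // momR1_ge0.
Qed.

Lemma qq_ge0 e : 0 <= qq e.
Proof. by rewrite /qq /edge_prob le_min raw_ge0 ler01. Qed.

Lemma qq_le1 e : qq e <= 1.
Proof. by rewrite /qq /edge_prob ge_min lexx orbT. Qed.

Lemma qq_le_raw e : qq e <= wL e.1 * wR e.2 / (nR%:R * momR wR 1).
Proof. by rewrite /qq /edge_prob ge_min lexx. Qed.

Lemma pair_neq2 (a b : 'I_nL) (z z' : 'I_nR) : z' != z -> (a, z') != (b, z).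
Proof. by move=> nz; apply: contra nz => /eqP[_ ->]. Qed.

Lemma pair_neq1 (a b : 'I_nL) (z z' : 'I_nR) : a != b -> (a, z') != (b, z).
Proof. by move=> nz; apply: contra nz => /eqP[-> _]. Qed.

Variables u1 u2 : 'I_nL.
Hypothesis hu : u1 != u2.

Definition Cz (z : 'I_nR) (E : {set ('I_nL * 'I_nR)}) : bool :=
  [exists z', (z' != z) && ((u1, z') \in E) && ((u2, z') \in E)].

Lemma Cz_inv z a (E : {set ('I_nL * 'I_nR)}) : Cz z (E :\ (a, z)) = Cz z E.
Proof.
apply: eq_existsb => z'; rewrite !in_setD1.
case: (eqVneq z' z) => [->|nz] //=.
by rewrite !pair_neq2.
Qed.

Definition Bp : pred {set ('I_nL * 'I_nR)} := [pred E | proj_edge E u1 u2].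

Lemma Prg_Az z :
  Prg qq [pred E : {set ('I_nL * 'I_nR)} | ((u1, z) \in E) &&
        [pred E : {set ('I_nL * 'I_nR)} | ((u2, z) \in E) && Cz z E] E]
  <= qq (u1, z) * qq (u2, z) * Prg qq Bp.
Proof.
rewrite (@Prg_factor _ _ qq); last first.
  by move=> E /=; rewrite in_setD1 Cz_inv pair_neq1 // eq_sym.
rewrite -mulrA ler_wpM2l ?qq_ge0 //.
have -> : Prg qq [pred E : {set ('I_nL * 'I_nR)} | ((u2, z) \in E) && Cz z E]
   = qq (u2, z) * Prg qq (Cz z).
  apply: (@Prg_factor _ _ qq) => E; exact: Cz_inv.
rewrite ler_wpM2l ?qq_ge0 //; apply: (@Prg_mono _ _ qq qq_ge0 qq_le1) => E /existsP[z' /andP[/andP[_ h1] h2]].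
rewrite /Bp /= /proj_edge hu /=; apply/existsP; exists z'; by rewrite h1 h2.
Qed.


Lemma key :
  Prg qq [pred E : {set ('I_nL * 'I_nR)} | (2 <= common_nb E u1 u2)%N && proj_edge E u1 u2]
  <= (\sum_z qq (u1, z) * qq (u2, z)) * Prg qq Bp.
Proof.
apply: le_trans; first apply: (@Prg_union _ _ qq qq_ge0 qq_le1 _ _
  (fun z => [pred E : {set ('I_nL * 'I_nR)} | ((u1, z) \in E) &&
        [pred E : {set ('I_nL * 'I_nR)} | ((u2, z) \in E) && Cz z E] E])).
  move=> E /andP[/card_gt1P[x [y [hx hy nxy]]] _].
  move: hx hy; rewrite !inE => /andP[h1 h2] /andP[h3 h4].
  exists x; rewrite /= h1 h2 /=; apply/existsP; exists y.
  by rewrite h3 h4 eq_sym nxy.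
rewrite mulr_suml; apply: ler_sum => z _; exact: Prg_Az.
Qed.

Lemma sumq :
  \sum_z qq (u1, z) * qq (u2, z) <= momR wR 2 / momR wR 1 ^+ 2 * (wL u1 * wL u2 / nR%:R).
Proof.
case: (posnP nR) => [n0|npos].
  rewrite big1; last by move=> z; have := ltn_ord z; rewrite [X in (_ < X)%N -> _]n0.
  apply: mulr_ge0; apply: divr_ge0; rewrite ?exprn_ge0 ?momR1_ge0 ?ler0n //.
    by apply: divr_ge0; [apply: sumr_ge0 => v _; exact: exprn_ge0 (ltW (wRp v)) | exact: ler0n].
  by apply: mulr_ge0; apply: ltW.
apply: le_trans.
  apply: ler_sum => z _.
  apply: (ler_pM (qq_ge0 _) (qq_ge0 _) (qq_le_raw (u1, z)) (qq_le_raw (u2, z))).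
rewrite /=.
set S1 := \sum_(v < nR) wR v ^+ 1.
have S1p : 0 < S1.
  rewrite /S1 (bigD1 (Ordinal npos)) //= expr1.
  have := wRp (Ordinal npos).
  have : 0 <= \sum_(i < nR | i != Ordinal npos) wR i ^+ 1.
    by apply: sumr_ge0 => v _; rewrite expr1 ltW.
  lra.
have n0 : (nR%:R : R) != 0 by rewrite pnatr_eq0 -lt0n.
rewrite /momR -/S1.
have -> : \sum_z wL (u1, z).1 * wR (u1, z).2 / (nR%:R * (S1 / nR%:R)) *
            (wL (u2, z).1 * wR (u2, z).2 / (nR%:R * (S1 / nR%:R)))
        = wL u1 * wL u2 / S1 ^+ 2 * \sum_(v < nR) wR v ^+ 2.
  rewrite mulr_sumr; apply: eq_bigr => z _ /=.
  by field; rewrite n0 andbT lt0r_neq0.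
suff -> : (\sum_(v < nR) wR v ^+ 2) / nR%:R / (S1 / nR%:R) ^+ 2 * (wL u1 * wL u2 / nR%:R)
   = wL u1 * wL u2 / S1 ^+ 2 * \sum_(v < nR) wR v ^+ 2 by [].
by field; rewrite n0 andbT lt0r_neq0.
Qed.

End Main.

Theorem mainTheorem5 (R : realType) (delta : R)
  (nL nR : nat -> nat)
  (wL : forall m, 'I_(nL m) -> R) (wR : forall m, 'I_(nR m) -> R) :
  0 < delta ->
  (* n_L, n_R -> infinity along the sequence of instances *)
  (forall N, exists m0, forall m, (m0 <= m)%N -> (N <= nL m)%N) ->
  (forall N, exists m0, forall m, (m0 <= m)%N -> (N <= nR m)%N) ->
  (* positive weights *)
  (forall m u, 0 < wL m u) -> (forall m v, 0 < wR m v) ->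
  (* Assumption 1 *)
  (forall m u v, wL m u * wR m v / ((nR m)%:R * momR (wR m) 1) <= 1) ->
  (* Assumption 2: max(S_L u S_R) = O(n_R^(1/2 - delta)) *)
  (exists C, exists m0, forall m, (m0 <= m)%N ->
     (forall u, wL m u <= C * ((nR m)%:R `^ (2^-1 - delta))) /\
     (forall v, wR m v <= C * ((nR m)%:R `^ (2^-1 - delta)))) ->
  (* min S_L = Omega(1) *)
  (exists c, 0 < c /\ exists m0, forall m, (m0 <= m)%N -> forall u, c <= wL m u) ->
  (* M_R2 = O(M_R1^2) *)
  (exists C, exists m0, forall m, (m0 <= m)%N ->
     momR (wR m) 2 <= C * (momR (wR m) 1) ^+ 2) ->
  (* M_R4 = O(n_R^(1 - 2 delta)) *)
  (exists C, exists m0, forall m, (m0 <= m)%N ->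
     momR (wR m) 4 <= C * ((nR m)%:R `^ (1 - 2 * delta))) ->
  (* conclusion: Pr[N >= 2 | S_L, S_R, (u1,u2) in E] = O(p_{u1 u2}), uniformly in u1 != u2 *)
  exists C, exists m0, forall m, (m0 <= m)%N ->
    forall u1 u2 : 'I_(nL m), u1 != u2 ->
      condPr (wL m) (wR m)
        [pred Eb | (2 <= common_nb Eb u1 u2)%N]
        [pred Eb | proj_edge Eb u1 u2]
      <= C * (momR (wR m) 2 / (momR (wR m) 1) ^+ 2 * (wL m u1 * wL m u2 / (nR m)%:R)).
Proof.
move=> _ _ _ wLp wRp _ _ _ _ _; exists 1, 0%N => m _ u1 u2 hu.
rewrite mul1r /condPr.
have K := key (wLp m) (wRp m) hu.
have S := sumq (wLp m) (wRp m) u1 u2.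
have PB0 : 0 <= Pr (wL m) (wR m) [pred Eb | proj_edge Eb u1 u2].
  exact: (@Prg_ge0 _ _ (qq (wL m) (wR m)) (qq_ge0 (wLp m) (wRp m)) (qq_le1 (wL m) (wR m))).
have Sg0 : 0 <= \sum_z qq (wL m) (wR m) (u1, z) * qq (wL m) (wR m) (u2, z).
  by apply: sumr_ge0 => z _; rewrite mulr_ge0 // qq_ge0.
case: (eqVneq (Pr (wL m) (wR m) [pred Eb | proj_edge Eb u1 u2]) 0) => [->|nz].
  rewrite invr0 mulr0; exact: le_trans Sg0 S.
have Pp : 0 < Pr (wL m) (wR m) [pred Eb | proj_edge Eb u1 u2] by rewrite lt0r nz.
rewrite ler_pdivrMr //; apply: le_trans K _.
by rewrite ler_wpM2r.
Qed.
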